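(* Let $g(x)=(x+1)\ln(x+1)-x\ln x$ (entropy in nats of a thermal state with mean photon number $x$). For $\eta\in[1/2,1)$ and $N_S>0$ with $(1-\eta)N_S\ge 2$, \[ g(\eta N_S)-g((1-\eta)N_S)\ge \ln\eta-\ln(1-\eta)-\frac{1}{\eta(1-\eta)N_S}. \] Consequently, for $\epsilon>0$, choosing the photon-number-sharing parameter $\lambda=1/[\eta(1-\eta)\epsilon N_S\ln 2]$, whenever $\lambda(1-\eta)N_S\ge 2$ and $\eta\ge 1-\eta$, gives a quantum communication rate $g_2(\lambda\eta N_S)-g_2(\lambda(1-\eta)N_S)$ (in qubits per channel use) that is within $\epsilon$ of $\log_2\eta-\log_2(1-\eta)$, i.e. \[ g_2(\lambda\eta N_S)-g_2(\lambda(1-\eta)N_S)\ge \log_2\eta-\log_2(1-\eta)-\epsilon, \] where $g_2(x)=(x+1)\log_2(x+1)-x\log_2 x$.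
   Context: $\log_2\eta-\log_2(1-\eta)$ is the high-photon-number limit of the quantum communication rate $g_2(\eta N)-g_2((1-\eta)N)$ of a pure-loss bosonic channel with transmissivity $\eta$ and mean input photon number $N$. The photon-number-sharing parameter $\lambda$ is the fraction of the available mean photon number $N_S$ dedicated to quantum communication in a trade-off code. *)

(* Defs.v *)
From Stdlib Require Import Reals.
Open Scope R_scope.

Definition g (x : R) : R := (x + 1) * ln (x + 1) - x * ln x.

Definition log2 (x : R) : R := ln x / ln 2.

Definition g2 (x : R) : R := (x + 1) * log2 (x + 1) - x * log2 x.

(* Main.v *)
Require Import Defs.
From Stdlib Require Import Reals Lra.
Open Scope R_scope.

Lemma ln_le_sub1 y : 0 < y -> ln y <= y - 1.
Proof. intros H. pose proof (exp_ineq1_le (ln y)). rewrite exp_ln in H0; lra. Qed.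

Lemma g_lower a : 0 < a -> g a >= ln a + 1.
Proof.
  intros Ha. unfold g.
  assert (E : ln a = ln (a/(a+1)) + ln (a+1)).
  { rewrite <- ln_mult. f_equal. field. lra. apply Rdiv_lt_0_compat; lra. lra. }
  pose proof (ln_le_sub1 (a/(a+1)) ltac:(apply Rdiv_lt_0_compat; lra)).
  assert (H1 : (a+1) * ln (a/(a+1)) <= (a+1)*(a/(a+1) - 1)).
  { apply Rmult_le_compat_l; lra. }
  replace ((a+1)*(a/(a+1)-1)) with (-1) in H1 by (field; lra).
  rewrite E. nra.
Qed.

Lemma g_upper b : 0 < b -> g b <= ln b + 1 + 1/b.
Proof.
  intros Hb. unfold g.
  assert (E : ln (b+1) = ln ((b+1)/b) + ln b).
  { rewrite <- ln_mult. f_equal. field. lra. apply Rdiv_lt_0_compat; lra. lra. }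
  pose proof (ln_le_sub1 ((b+1)/b) ltac:(apply Rdiv_lt_0_compat; lra)).
  assert (H1 : (b+1) * ln ((b+1)/b) <= (b+1)*((b+1)/b - 1)).
  { apply Rmult_le_compat_l; lra. }
  replace ((b+1)*((b+1)/b-1)) with (1 + 1/b) in H1 by (field; lra).
  rewrite E. nra.
Qed.

Lemma part1 : forall eta NS : R,
     1 / 2 <= eta -> eta < 1 -> 0 < NS -> 2 <= (1 - eta) * NS ->
     g (eta * NS) - g ((1 - eta) * NS)
       >= ln eta - ln (1 - eta) - 1 / (eta * (1 - eta) * NS).
Proof.
  intros eta NS H1 H2 H3 H4.
  assert (Pa : 0 < eta * NS) by nra.
  assert (Pb : 0 < (1-eta) * NS) by nra.
  pose proof (g_lower _ Pa). pose proof (g_upper _ Pb).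
  rewrite (ln_mult eta NS) in H by lra.
  rewrite (ln_mult (1-eta) NS) in H0 by lra.
  assert (1 / ((1-eta)*NS) <= 1/(eta*(1-eta)*NS)).
  { unfold Rdiv. rewrite !Rmult_1_l. apply Rinv_le_contravar. nra.
    nra. }
  lra.
Qed.

Theorem proposition3 :
  (forall eta NS : R,
     1 / 2 <= eta -> eta < 1 -> 0 < NS -> 2 <= (1 - eta) * NS ->
     g (eta * NS) - g ((1 - eta) * NS)
       >= ln eta - ln (1 - eta) - 1 / (eta * (1 - eta) * NS))
  /\
  (forall eta NS eps lambda : R,
     1 / 2 <= eta -> eta < 1 -> 0 < NS -> 0 < eps ->
     lambda = 1 / (eta * (1 - eta) * eps * NS * ln 2) ->
     2 <= lambda * (1 - eta) * NS -> 1 - eta <= eta ->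
     g2 (lambda * eta * NS) - g2 (lambda * (1 - eta) * NS)
       >= log2 eta - log2 (1 - eta) - eps).
Proof.
  split. exact part1.
  intros eta NS eps lambda H1 H2 H3 H4 Hl H5 H6.
  assert (L2 : 0 < ln 2) by (rewrite <- ln_1; apply ln_increasing; lra).
  assert (Pd : 0 < eta * (1 - eta) * eps * NS * ln 2).
  { repeat apply Rmult_lt_0_compat; lra. }
  assert (Pl : 0 < lambda) by (rewrite Hl; apply Rdiv_lt_0_compat; lra).
  pose proof (part1 eta (lambda*NS) H1 H2 ltac:(nra) ltac:(nra)) as P.
  assert (Eg : forall x, g2 x = g x / ln 2).
  { intros x. unfold g2, g, log2. field. lra. }
  rewrite !Eg. unfold log2.
  replace (lambda*eta*NS) with (eta*(lambda*NS)) by ring.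
  replace (lambda*(1-eta)*NS) with ((1-eta)*(lambda*NS)) by ring.
  assert (Ee : 1 / (eta * (1 - eta) * (lambda * NS)) = eps * ln 2).
  { rewrite Hl. field. repeat split; try lra. }
  rewrite Ee in P.
  assert (Q : (g (eta * (lambda * NS)) - g ((1 - eta) * (lambda * NS))) / ln 2
             >= (ln eta - ln (1 - eta) - eps * ln 2) / ln 2).
  { apply Rle_ge. unfold Rdiv. apply Rmult_le_compat_r.
    left; apply Rinv_0_lt_compat; lra. lra. }
  replace ((ln eta - ln (1 - eta) - eps * ln 2) / ln 2) with
    (ln eta / ln 2 - ln (1-eta)/ln 2 - eps) in Q by (field; lra).
  unfold Rdiv in *. lra.
Qed.
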